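(* Let $n,k$ be positive integers, $F\subseteq\{1,\dots,n\}$ with $|F|=k$, and $0<\eta\le\frac1{4k}$. Let $x(t)\in\{0,1\}^n$ satisfy, for every $t\ge0$, $x_i(t)=1$ for $i\in F$ and $x_i(t)=0$ for $i\notin F$. Let $w(0)\in\mathbb R^n$ have all coordinates equal with $0<w_i(0)<\frac1{\sqrt k}$ for every $i$, and for $t\ge1$ define $w(t)=w(t-1)+\eta\,z(t-1)\big(x(t-1)-z(t-1)w(t-1)\big)$ where $z(t-1)=w(t-1)\cdot x(t-1)$. Then for every $t\ge1$: (1) all $w_i(t)$, $i\in F$, are equal, and all $w_i(t)$, $i\notin F$, are equal; (2) $0<w_i(t)<\frac1{\sqrt k}$ for every $i$; (3) $w_i(t)>w_i(0)$ for every $i\in F$; (4) $w_i(t)<w_i(0)$ for every $i\notin F$.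
   Context: This describes repeated application of Oja's learning rule to a single neuron that is engaged in learning at every step and always receives the same input vector. *)

(* Defs.v *)
From HB Require Import structures.
From mathcomp Require Import all_boot all_order all_algebra.
Set Implicit Arguments. Unset Strict Implicit. Unset Printing Implicit Defensive.
Import Order.TTheory GRing.Theory Num.Theory.
Local Open Scope ring_scope.

Definition oja_out (R : ringType) (n : nat) (w x : 'I_n -> R) : R :=
  \sum_(j < n) w j * x j.

Definition oja_step (R : ringType) (n : nat) (eta : R) (w x : 'I_n -> R) : 'I_n -> R :=
  fun i => w i + eta * oja_out w x * (x i - oja_out w x * w i).

(* Main.v *)
Require Import Defs.
From HB Require Import structures.
From mathcomp Require Import all_boot all_order all_algebra.
From mathcomp Require Import ring lra.
Import Order.TTheory GRing.Theory Num.Theory.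
Local Open Scope ring_scope.
Lemma A (R : rcfType) (q k eta a : R) : 0 < q -> q*q = k -> 0 < eta -> 4*k*eta <= 1 -> 0 < a -> q*a < 1 ->
  a < a + eta*(k*a)*(1 - (k*a)*a) /\ q * (a + eta*(k*a)*(1 - (k*a)*a)) < 1.
Proof.
move=> hq hk he hke ha hqa.
set z := k*a; set a' := a + _.
have hs: 0 < q*a by apply: mulr_gt0.
have hc: 0 < eta * k by rewrite mulr_gt0 // -hk mulr_gt0.
have e1: a' = a * (1 + (eta*k)*(1 - (q*a)*(q*a))) by rewrite /a' /z -hk; ring.
have h1: 0 < 1 - (q*a)*(q*a) by nra.
have h2: 0 < (eta*k)*(1 - (q*a)*(q*a)) by apply: mulr_gt0.
rewrite e1; split.
  nra.
have e2: q * (a * (1 + (eta*k)*(1 - (q*a)*(q*a)))) = (q*a) * (1 + (eta*k)*(1 - (q*a)*(q*a))) by ring.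
rewrite e2.
move: hs hc hqa; set s := q*a; set c := eta*k => hs hc hqa.
have hc4 : 4*c <= 1 by rewrite /c; lra.
have g1: c*s*(1+s) < 1/2 by nra.
have g2: 0 < (1-s)*(1 - c*s*(1+s)) by apply: mulr_gt0; lra.
have ->: s * (1 + c * (1 - s * s)) = 1 - (1-s)*(1 - c*s*(1+s)) by ring.
lra.
Qed.
Lemma B (R : rcfType) (q k eta a b : R) : 0 < q -> q*q = k -> 0 < eta -> 4*k*eta <= 1 -> 0 < a -> q*a < 1 -> 0 < b ->
  0 < b + eta*(k*a)*(0 - (k*a)*b) /\ b + eta*(k*a)*(0 - (k*a)*b) < b.
Proof.
move=> hq hk he hke ha hqa hb.
set z := k*a; set b' := b + _.
have hs: 0 < q*a by apply: mulr_gt0.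
have hc: 0 < eta * k by rewrite mulr_gt0 // -hk mulr_gt0.
have e1: b' = b * (1 - (eta*k)*((q*a)*(q*a))) by rewrite /b' /z -hk; ring.
rewrite e1.
move: hs hc hqa; set s := q*a; set c := eta*k => hs hc hqa.
have hc4 : 4*c <= 1 by rewrite /c; lra.
have hss: s*s < 1 by nra.
have hs2: 0 < s*s by nra.
have : c * (s*s) < 1/4 by nra.
have : 0 < c * (s*s) by apply: mulr_gt0.
move=> h3 h4.
have h5: 0 < 1 - c*(s*s) by lra.
split; first by apply: mulr_gt0.
have: 0 < b * (c*(s*s)) by apply: mulr_gt0.
move=> h6; have ->: b * (1 - c*(s*s)) = b - b * (c*(s*s)) by ring.
lra.
Qed.

Theorem mainTheorem9 (R : rcfType) (n k : nat) (F : {set 'I_n}) (eta : R)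
    (x w : nat -> 'I_n -> R) :
  (0 < n)%N -> (0 < k)%N -> #|F| = k ->
  0 < eta -> eta <= (4 * k%:R)^-1 ->
  (forall t i, x t i = if i \in F then 1 else 0) ->
  (forall i j, w 0%N i = w 0%N j) ->
  (forall i, 0 < w 0%N i < (Num.sqrt k%:R)^-1) ->
  (forall t, w t.+1 = oja_step eta (w t) (x t)) ->
  forall t, (1 <= t)%N ->
    [/\ (forall i j, i \in F -> j \in F -> w t i = w t j),
        (forall i j, i \notin F -> j \notin F -> w t i = w t j),
        (forall i, 0 < w t i < (Num.sqrt k%:R)^-1),
        (forall i, i \in F -> w 0%N i < w t i) &
        (forall i, i \notin F -> w t i < w 0%N i)].
Proof.
move=> hn hk hF he heta hx hw0e hw0 hstep.
set q := Num.sqrt k%:R.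
have hkR : (0 : R) < k%:R by rewrite ltr0n.
have hq : 0 < q by rewrite sqrtr_gt0.
have hqq : q * q = k%:R by rewrite -expr2 sqr_sqrtr // ltW.
have hke : 4 * k%:R * eta <= 1.
  have h4 : (0:R) < 4 * k%:R by rewrite mulr_gt0.
  by move: heta; rewrite -(ler_pM2l h4) mulfV // gt_eqF.
have conv : forall a : R, (a < q^-1) = (q * a < 1).
  by move=> a; rewrite -[LHS](ltr_pM2l hq) mulfV // gt_eqF.
have [i0 hi0] : exists i0, i0 \in F.
  by apply/set0Pn; rewrite -card_gt0 hF.
have out : forall t i, i \in F -> (forall j, j \in F -> w t j = w t i) ->
    oja_out (w t) (x t) = k%:R * w t i.
  move=> t i hi heq; rewrite /oja_out.
  rewrite (eq_bigr (fun j => if j \in F then w t i else 0)); last first.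
    by move=> j _; rewrite hx; case: ifP => hj; rewrite ?mulr1 ?mulr0 ?heq.
  by rewrite -big_mkcond sumr_const hF mulr_natl.
pose P t := [/\ (forall i j, i \in F -> j \in F -> w t i = w t j),
        (forall i j, i \notin F -> j \notin F -> w t i = w t j),
        (forall i, 0 < w t i /\ q * w t i < 1),
        (forall i, i \in F -> w 0%N i <= w t i) &
        (forall i, i \notin F -> w t i <= w 0%N i)].
have stepF : forall t i, P t -> i \in F ->
    w t.+1 i = w t i + eta * (k%:R * w t i) * (1 - (k%:R * w t i) * w t i).
  move=> t i [e1 _ _ _ _] hi.
  rewrite hstep /oja_step (out t i hi) ?hx ?hi // => j hj; exact: e1.
have stepN : forall t i, P t -> i \notin F ->
    w t.+1 i = w t i + eta * (k%:R * w t i0) * (0 - (k%:R * w t i0) * w t i).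
  move=> t i [e1 _ _ _ _] hi.
  rewrite hstep /oja_step (out t i0 hi0) ?hx ?(negbTE hi) // => j hj; exact: e1.
have mono : forall t, P t ->
   (forall i, i \in F -> w t i < w t.+1 i) /\ (forall i, i \notin F -> w t.+1 i < w t i).
  move=> t Pt; have Pt' := Pt; case: Pt' => e1 e2 e3 e4 e5; split.
    move=> i hi; rewrite (stepF t i Pt hi).
    have [ha hqa] := e3 i.
    by case: (@A _ _ _ _ _ hq hqq he hke ha hqa).
  move=> i hi; rewrite (stepN t i Pt hi).
  have [ha hqa] := e3 i0; have [hb _] := e3 i.
  by case: (@B _ _ _ _ _ _ hq hqq he hke ha hqa hb).
have allP : forall t, P t.
  elim=> [|t IH].
    split => //; first by move=> i; have /andP[h1 h2] := hw0 i; rewrite -conv.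
  have [m1 m2] := mono t IH.
  have IH' := IH; case: IH' => e1 e2 e3 e4 e5.
  split.
  - by move=> i j hi hj; rewrite (stepF t i IH hi) (stepF t j IH hj) (e1 i j).
  - by move=> i j hi hj; rewrite (stepN t i IH hi) (stepN t j IH hj) (e2 i j).
  - move=> i; case: (boolP (i \in F)) => hi.
      rewrite (stepF t i IH hi); have [ha hqa] := e3 i.
      case: (@A _ _ _ _ _ hq hqq he hke ha hqa) => h1 h2; split => //; lra.
    rewrite (stepN t i IH hi); have [ha hqa] := e3 i0; have [hb hqb] := e3 i.
    case: (@B _ _ _ _ _ _ hq hqq he hke ha hqa hb) => h1 h2; split => //.
    have : q * (w t i + eta * (k%:R * w t i0) * (0 - k%:R * w t i0 * w t i)) < q * w t i.
      by rewrite ltr_pM2l.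
    lra.
  - by move=> i hi; apply: (le_trans (e4 i hi)); apply: ltW; apply: m1.
  - by move=> i hi; apply: le_trans (e5 i hi); apply: ltW; apply: m2.
case=> [//|t] _.
have [m1 m2] := mono t (allP t).
case: (allP t) => e1 e2 _ e4 e5.
case: (allP t.+1) => f1 f2 f3 _ _.
split => //.
- by move=> i; have [h1 h2] := f3 i; rewrite conv h1.
- by move=> i hi; apply: le_lt_trans (e4 i hi) (m1 i hi).
- by move=> i hi; apply: lt_le_trans (m2 i hi) (e5 i hi).
Qed.
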